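(* Let $Q=\{q(k)\}_{k\ge1}$ be a strictly increasing sequence of positive integers with $q(k+1)/q(k)\to\infty$. Then there exists $\alpha\in(\tfrac13,\tfrac23)$ such that $\{\alpha q(k)\}\to0$ as $k\to\infty$, where $\{x\}$ denotes the fractional part of $x$.
   Context: $\{x\}=x-\lfloor x\rfloor$ denotes the fractional part of a real number $x$. *)

(* Defs.v *)
From Stdlib Require Import Reals.
Open Scope R_scope.

(* Fractional part {x} = x - floor x; Stdlib's frac_part r = r - IZR (Int_part r),
   where Int_part r = up r - 1 is the floor. *)
Definition frac (x : R) : R := frac_part x.

(* Main.v *)
Require Import Defs.
From Stdlib Require Import Reals Lra Lia ZArith.
Open Scope R_scope.
Section S.
Variable Q : nat -> R.
Hypothesis hQ0 : 7 <= Q 0.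
Hypothesis hQpos : forall i, 0 < Q i.
Hypothesis hQr : forall i, 7 * Q i < Q (S i).

Fixpoint y (i : nat) : Z := match i with
 | O => up (Q 0 / 3)
 | S j => up (IZR (y j) * Q (S j) / Q j) end.
Definition x i := IZR (y i) / Q i.

Lemma x_step i : x i < x (S i) /\ x (S i) <= x i + 1 / Q (S i).
Proof.
  unfold x; simpl. destruct (archimed (IZR (y i) * Q (S i) / Q i)) as [H1 H2].
  set (u := IZR (up _)) in *.
  assert (Hi := hQpos i). assert (Hs := hQpos (S i)).
  assert (E : IZR (y i) * Q (S i) / Q i = (IZR (y i) / Q i) * Q (S i)) by (field; lra).
  rewrite E in H1, H2.
  set (a := IZR (y i) / Q i) in *.
  split.
  - apply (Rmult_lt_reg_r (Q (S i))); auto. unfold Rdiv. rewrite Rmult_assoc, Rinv_l; lra.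
  - apply (Rmult_le_reg_r (Q (S i))); auto. unfold Rdiv.
    rewrite Rmult_assoc, Rinv_l by lra. rewrite Rmult_plus_distr_r, Rmult_assoc, Rinv_l by lra. lra.
Qed.

Lemma x_mono i d : x i <= x (i + d).
Proof. induction d. rewrite Nat.add_0_r; lra.
  rewrite Nat.add_succ_r. destruct (x_step (i+d)); lra. Qed.

Lemma x_up i d : x (i + d) <= x i + 2 / Q (S i) - 2 / Q (S (i + d)).
Proof. induction d. rewrite Nat.add_0_r; lra.
  rewrite Nat.add_succ_r. destruct (x_step (i+d)) as [_ H].
  assert (2 / Q (S (S (i + d))) <= 1 / Q (S (i + d))).
  { assert (A:=hQpos (S (i+d))). assert (B:=hQr (S (i+d))).
    apply (Rmult_le_reg_r (Q (S (S (i+d))) * Q (S (i+d)))). nra.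
    unfold Rdiv. field_simplify; lra. }
  lra. Qed.

Lemma core : exists alpha, 1/3 < alpha /\ alpha < 2/3 /\
  forall i, exists n : Z, IZR n <= alpha * Q i <= IZR n + 2 * Q i / Q (S i).
Proof.
  set (E := fun r => exists i, r = x i).
  assert (Hpos2 : forall i, 0 < 2 / Q (S i)) by (intro; unfold Rdiv; apply Rmult_lt_0_compat; [lra|apply Rinv_0_lt_compat; auto]).
  assert (Hb : forall i j, x j <= x i + 2 / Q (S i)).
  { intros i j. destruct (le_lt_dec i j) as [h|h].
    - replace j with (i + (j - i))%nat by lia. pose proof (x_up i (j-i)).
      pose proof (Hpos2 (i + (j-i))%nat). lra.
    - replace i with (j + (i - j))%nat by lia. pose proof (x_mono j (i-j)).
      pose proof (Hpos2 (j + (i-j))%nat). lra. }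
  destruct (completeness E) as [alpha [Hub Hl]].
  { exists (x 0 + 2 / Q 1). intros r [j ->]. apply Hb. }
  { exists (x 0), 0%nat. reflexivity. }
  assert (Hge : forall i, x i <= alpha) by (intro i; apply Hub; exists i; auto).
  assert (Hle : forall i, alpha <= x i + 2 / Q (S i)) by (intro i; apply Hl; intros r [j ->]; apply Hb).
  exists alpha. split; [|split].
  - pose proof (Hge 0%nat). unfold x in H; simpl in H.
    destruct (archimed (Q 0 / 3)) as [A _].
    assert (1/3 < IZR (up (Q 0 / 3)) / Q 0).
    { apply (Rmult_lt_reg_r (Q 0)). apply hQpos. pose proof (hQpos 0). field_simplify; lra. }
    lra.
  - pose proof (Hle 0%nat). unfold x in H; simpl in H.
    destruct (archimed (Q 0 / 3)) as [_ A].
    set (u := IZR (up (Q 0 / 3))) in *. assert (P := hQpos 0). assert (R1 := hQr 0).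
    assert (u / Q 0 + 2 / Q 1 < 2/3).
    { apply (Rmult_lt_reg_r (Q 0 * Q 1)). nra. field_simplify; try lra. nra. }
    lra.
  - intro i. exists (y i). assert (P := hQpos i). assert (P1 := hQpos (S i)).
    assert (Ex : IZR (y i) = x i * Q i) by (unfold x; field; lra).
    specialize (Hge i). specialize (Hle i). split.
    + rewrite Ex. apply Rmult_le_compat_r; lra.
    + rewrite Ex. replace (x i * Q i + 2 * Q i / Q (S i)) with ((x i + 2 / Q (S i)) * Q i) by (field; lra).
      apply Rmult_le_compat_r; lra.
Qed.
End S.

Lemma frac_eq (n : Z) (e : R) : 0 <= e < 1 -> frac (IZR n + e) = e.
Proof.
  intros [h0 h1]. unfold frac, frac_part, Int_part.
  rewrite <- (tech_up (IZR n + e) (n + 1)).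
  - rewrite Z.add_simpl_r. lra.
  - rewrite plus_IZR; simpl; lra.
  - rewrite plus_IZR; simpl; lra.
Qed.

Theorem lemma3 (q : nat -> nat)
  (hpos : forall k, (1 <= k)%nat -> (0 < q k)%nat)
  (hinc : forall k, (1 <= k)%nat -> (q k < q (S k))%nat)
  (hratio : forall M : R, exists N : nat, forall k, (N <= k)%nat -> (1 <= k)%nat ->
              INR (q (S k)) / INR (q k) > M) :
  exists alpha : R, 1/3 < alpha /\ alpha < 2/3 /\
    Un_cv (fun k => frac (alpha * INR (q k))) 0.
Proof.
  destruct (hratio 7) as [N HN].
  set (K0 := S (Nat.max N 1)).
  set (Q := fun i => INR (q (K0 + i)%nat)).
  assert (qpos : forall k, (1 <= k)%nat -> 0 < INR (q k)) by (intros; apply lt_0_INR; auto).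
  assert (hQpos : forall i, 0 < Q i) by (intro; apply qpos; unfold K0; lia).
  assert (rat : forall k, (Nat.max N 1 <= k)%nat -> 7 * INR (q k) < INR (q (S k))).
  { intros k hk. assert (h := HN k ltac:(lia) ltac:(lia)). assert (p := qpos k ltac:(lia)).
    apply Rgt_lt in h. apply (Rmult_lt_compat_r (INR (q k))) in h; auto.
    unfold Rdiv in h. rewrite Rmult_assoc, Rinv_l in h; lra. }
  assert (hQr : forall i, 7 * Q i < Q (S i)).
  { intro i. unfold Q. rewrite Nat.add_succ_r. apply rat. unfold K0; lia. }
  assert (hQ0 : 7 <= Q O).
  { unfold Q. rewrite Nat.add_0_r. unfold K0. pose proof (rat (Nat.max N 1) (le_n _)).
    assert (1 <= INR (q (Nat.max N 1))). { replace 1 with (INR 1) by reflexivity. apply le_INR. apply hpos. lia. }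
    lra. }
  destruct (core Q hQ0 hQpos hQr) as [alpha [h1 [h2 h3]]].
  exists alpha. split; [lra|split; [lra|]].
  intros eps heps.
  destruct (hratio (2/eps)) as [N' HN'].
  exists (Nat.max N' K0). intros k hk. unfold R_dist.
  destruct (h3 (k - K0)%nat) as [n [hn1 hn2]].
  unfold Q in hn1, hn2.
  replace (K0 + (k - K0))%nat with k in hn1, hn2 by lia.
  replace (K0 + S (k - K0))%nat with (S k) in hn2 by lia.
  assert (pk := qpos k ltac:(unfold K0 in hk; lia)).
  assert (r7 := rat k ltac:(unfold K0 in hk; lia)).
  assert (re := HN' k ltac:(lia) ltac:(unfold K0 in hk; lia)).
  assert (A : 2 * INR (q k) / INR (q (S k)) < eps).
  { assert (C : 2 * INR (q k) < eps * INR (q (S k))).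
    { replace (INR (q (S k))) with (INR (q (S k)) / INR (q k) * INR (q k)) by (field; lra).
      replace (2 * INR (q k)) with (eps * (2 / eps) * INR (q k)) by (field; lra).
      rewrite (Rmult_assoc eps). apply Rmult_lt_compat_l; auto. }
    apply (Rmult_lt_reg_r (INR (q (S k)))). lra. field_simplify; lra. }
  assert (B : 2 * INR (q k) / INR (q (S k)) < 1).
  { apply (Rmult_lt_reg_r (INR (q (S k)))). lra. field_simplify; lra. }
  replace (alpha * INR (q k)) with (IZR n + (alpha * INR (q k) - IZR n)) by ring.
  rewrite frac_eq by lra. rewrite Rminus_0_r, Rabs_right; lra.
Qed.
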